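(* Let $\mathcal H_a,\mathcal H_b$ be finite-dimensional Hilbert spaces and let $H$ be a Hermitian operator on $\mathcal H_a\otimes\mathcal H_b$. Then $$\mathcal C_{\rm P}^{1}(H)=\|H\|_\infty-\big(\Delta E_{\rm Sep}(H)+\Delta E_{\rm Sep}(-H)\big).$$
   Context: For a density operator $\rho$ on $\mathcal H_a\otimes\mathcal H_b$, the parallel capacity is $\mathcal C_{\rm P}(\rho,H):=\max_{U_a,U_b}\mathrm{tr}[(U_a\otimes U_b)\rho(U_a\otimes U_b)^\dagger H]-\min_{U_a,U_b}\mathrm{tr}[(U_a\otimes U_b)\rho(U_a\otimes U_b)^\dagger H]$, where $U_a,U_b$ range over all unitaries on $\mathcal H_a$, $\mathcal H_b$ respectively. Let $\mathcal S^1$ be the set of separable density operators on $\mathcal H_a\otimes\mathcal H_b$ (convex hull of product states $\rho_a\otimes\rho_b$), and $\mathcal C_{\rm P}^1(H):=\max_{\rho\in\mathcal S^1}\mathcal C_{\rm P}(\rho,H)$. Let $E_0$ and $E_{\max}$ denote the smallest and largest eigenvalues of $H$, and set $\|H\|_\infty:=E_{\max}-E_0$. The entanglement gap energy is $\Delta E_{\rm Sep}(H):=\min_{\rho\in\mathcal S^1}\mathrm{tr}[\rho H]-E_0$ (and $\Delta E_{\rm Sep}(-H)$ is the same quantity for $-H$, whose smallest eigenvalue is $-E_{\max}$). *)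

(* Defs.v *)
From HB Require Import structures.
From mathcomp Require Import all_boot all_order all_algebra.
From mathcomp Require Import spectral complex mxtens.
From mathcomp Require Import classical_sets reals.
Set Implicit Arguments.
Unset Strict Implicit.
Unset Printing Implicit Defensive.
Import Order.TTheory GRing.Theory Num.Theory.
Local Open Scope ring_scope.
Local Open Scope classical_set_scope.

Section QDefs.
Variable R : realType.
Local Notation C := R[i].

Definition adj m n (A : 'M[C]_(m, n)) : 'M[C]_(n, m) := map_mx Num.conj (trmx A).

Definition hermitian_op n (A : 'M[C]_n) : Prop := adj A = A.

Definition psd n (A : 'M[C]_n) : Prop :=
  hermitian_op A /\ forall v : 'rV[C]_n, 0 <= (v *m A *m adj v) 0 0.

Definition density n (rho : 'M[C]_n) : Prop := psd rho /\ \tr rho = 1.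

Definition separable m n (rho : 'M[C]_(m * n)) : Prop :=
  exists (k : nat) (p : 'I_k -> R) (ra : 'I_k -> 'M[C]_m) (rb : 'I_k -> 'M[C]_n),
    [/\ forall i, 0 <= p i,
        \sum_(i < k) p i = 1,
        forall i, density (ra i) /\ density (rb i)
      & rho = \sum_(i < k) (p i)%:C%C *: tensmx (ra i) (rb i)].

(* tr[(Ua (x) Ub) rho (Ua (x) Ub)^dagger H] (real part; it is real for Hermitian rho, H) *)
Definition energy m n (H rho : 'M[C]_(m * n)) (Ua : 'M[C]_m) (Ub : 'M[C]_n) : R :=
  let U := tensmx Ua Ub in complex.Re (\tr (U *m rho *m adj U *m H)).

Definition local_energies m n (H rho : 'M[C]_(m * n)) : set R :=
  [set x | exists (Ua : 'M[C]_m) (Ub : 'M[C]_n),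
     [/\ Ua \is unitarymx, Ub \is unitarymx & x = energy H rho Ua Ub]].

Definition CP m n (rho H : 'M[C]_(m * n)) : R :=
  sup (local_energies H rho) - inf (local_energies H rho).

Definition CP1 m n (H : 'M[C]_(m * n)) : R :=
  sup [set x | exists rho, separable rho /\ x = CP rho H].

Definition Emin n (H : 'M[C]_n) : R := inf [set x : R | eigenvalue H x%:C%C].
Definition Emax n (H : 'M[C]_n) : R := sup [set x : R | eigenvalue H x%:C%C].

Definition DeltaESep m n (H : 'M[C]_(m * n)) : R :=
  inf [set x | exists rho, separable rho /\ x = complex.Re (\tr (rho *m H))] - Emin H.

End QDefs.

(* Main.v *)
Require Import Defs.
From HB Require Import structures.
From mathcomp Require Import all_boot all_order all_algebra.
From mathcomp Require Import spectral complex mxtens sesquilinear.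
From mathcomp Require Import classical_sets reals.
From mathcomp Require Import lra.
Import Order.TTheory GRing.Theory Num.Theory.
Local Open Scope ring_scope.
Local Open Scope sesquilinear_scope.
Set Implicit Arguments.
Unset Strict Implicit.

Section Helpers.
Variable R : realType.
Local Notation C := R[i].

Lemma adjE m n (A : 'M[C]_(m,n)) : adj A = A ^t*.
Proof. reflexivity. Qed.

Lemma adjM m n p (A : 'M[C]_(m,n)) (B : 'M[C]_(n,p)) : adj (A *m B) = adj B *m adj A.
Proof. by rewrite !adjE trmx_mul map_mxM. Qed.

Lemma adjK m n (A : 'M[C]_(m,n)) : adj (adj A) = A.
Proof. by rewrite !adjE trmxCK. Qed.

Lemma adjT m n p q (A : 'M[C]_(m,n)) (B : 'M[C]_(p,q)) : adj (A *t B) = adj A *t adj B.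
Proof. by rewrite !adjE trmx_tens map_mxT. Qed.

Lemma ReD (x y : C) : complex.Re (x + y) = complex.Re x + complex.Re y.
Proof. by case: x => a b; case: y => c d. Qed.

Lemma Re_sum I (r : seq I) (P : pred I) (F : I -> C) :
  complex.Re (\sum_(i <- r | P i) F i) = \sum_(i <- r | P i) complex.Re (F i).
Proof. by elim/big_rec2: _ => // i y1 y2 _ <-; rewrite ReD. Qed.

Lemma ReMC (c : R) (z : C) : complex.Re (c%:C%C * z) = c * complex.Re z.
Proof. by case: z => a b /=; rewrite mul0r subr0. Qed.

Lemma ReN (z : C) : complex.Re (- z) = - complex.Re z.
Proof. by case: z. Qed.

Definition fE n (H rho : 'M[C]_n) : R := complex.Re (\tr (rho *m H)).

Lemma fE_sum n (H : 'M[C]_n) N (c : 'I_N -> R) (M : 'I_N -> 'M[C]_n) :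
  fE H (\sum_(i < N) (c i)%:C%C *: M i) = \sum_(i < N) c i * fE H (M i).
Proof.
rewrite /fE mulmx_suml (@raddf_sum _ _ (@mxtrace _ n)) Re_sum; apply: eq_bigr => i _.
rewrite -scalemxAl -ReMC; congr complex.Re.
by rewrite /mxtrace mulr_sumr; apply: eq_bigr => j _; rewrite mxE.
Qed.

Lemma conv_bound n (H : 'M[C]_n) N (c : 'I_N -> R) (M : 'I_N -> 'M[C]_n) lo hi :
  (forall i, 0 <= c i) -> \sum_(i < N) c i = 1 ->
  (forall i, lo <= fE H (M i) <= hi) ->
  lo <= fE H (\sum_(i < N) (c i)%:C%C *: M i) <= hi.
Proof.
move=> c0 c1 hM; rewrite fE_sum; apply/andP; split.
  rewrite -[lo]mul1r -c1 mulr_suml; apply: ler_sum => i _.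
  by apply: ler_wpM2l => //; case/andP: (hM i).
rewrite -[hi]mul1r -c1 mulr_suml; apply: ler_sum => i _.
by apply: ler_wpM2l => //; case/andP: (hM i).
Qed.

Lemma tens_suml m n p q N (c : 'I_N -> R) (A : 'I_N -> 'M[C]_(m,n)) (B : 'M[C]_(p,q)) :
  (\sum_(i < N) (c i)%:C%C *: A i) *t B = \sum_(i < N) (c i)%:C%C *: (A i *t B).
Proof.
apply/matrixP => a b; rewrite !(mxE, summxE) mulr_suml; apply: eq_bigr => i _.
by rewrite !mxE mulrA.
Qed.

Lemma tens_sumr m n p q N (c : 'I_N -> R) (A : 'M[C]_(m,n)) (B : 'I_N -> 'M[C]_(p,q)) :
  A *t (\sum_(i < N) (c i)%:C%C *: B i) = \sum_(i < N) (c i)%:C%C *: (A *t B i).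
Proof.
apply/matrixP => a b; rewrite !(mxE, summxE) mulr_sumr; apply: eq_bigr => i _.
by rewrite !mxE mulrCA.
Qed.


Definition pu k (i0 : 'I_k) (W : 'M[C]_k) : 'M[C]_k := adj (row i0 W) *m row i0 W.

Lemma row_unit k (W : 'M[C]_k) i : W \is unitarymx -> row i W *m adj (row i W) = 1%:M.
Proof.
move=> /row_unitarymxP Wu; rewrite [LHS]mx11_scalar -dotmxE Wu eqxx.
by apply/matrixP => a b; rewrite !ord1 !mxE.
Qed.

Lemma adj_entry m n (A : 'M[C]_(m,n)) i j : adj A i j = (A j i)^*.
Proof. by rewrite /adj !mxE. Qed.

Lemma psd_quad n (v : 'rV[C]_n) : 0 <= (v *m adj v) 0 0.
Proof.
rewrite mxE sumr_ge0 // => j _; rewrite adj_entry; exact: mul_conjC_ge0.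
Qed.

Lemma pu_density k (i0 : 'I_k) W : W \is unitarymx -> density (pu i0 W).
Proof.
move=> Wu; split; first split.
- by rewrite /hermitian_op /pu adjM adjK.
- move=> v; rewrite /pu !mulmxA -[v *m _ *m _ *m _]mulmxA.
  have -> : row i0 W *m adj v = adj (v *m adj (row i0 W)) by rewrite adjM adjK.
  exact: psd_quad.
- by rewrite /pu mxtrace_mulC row_unit // mxtrace1.
Qed.

Lemma xrow_unitary k (W : 'M[C]_k) i j : W \is unitarymx -> xrow i j W \is unitarymx.
Proof.
move=> Wu; rewrite xrowE; apply: mul_unitarymx => //.
apply/unitarymxP; rewrite tr_tperm_mx map_tperm_mx /tperm_mx -perm_mxM perm.tperm2.
exact: perm_mx1.
Qed.

Lemma row_xrow k (W : 'M[C]_k) i j : row i (xrow i j W) = row j W.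
Proof. by apply/rowP => a; rewrite !mxE perm.tpermL. Qed.

Lemma unitary_conj_density k (U rho : 'M[C]_k) :
  U \is unitarymx -> density rho -> density (U *m rho *m adj U).
Proof.
move=> Uu [[hr pr] tr]; split; first split.
- by rewrite /hermitian_op !adjM adjK hr mulmxA.
- move=> v; have := pr (v *m U); by rewrite !adjM !mulmxA.
- rewrite mxtrace_mulC mulmxA.
  have -> : adj U *m U = 1%:M by apply: mulmx1C; exact/unitarymxP.
  by rewrite mul1mx.
Qed.


Lemma mul_diag_sum m k n (A : 'M[C]_(m,k)) (s : 'rV[C]_k) (B : 'M[C]_(k,n)) :
  A *m diag_mx s *m B = \sum_(i < k) s 0 i *: (col i A *m row i B).
Proof.
apply/matrixP => a b; rewrite mul_mx_diag summxE !mxE; apply: eq_bigr => i _.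
by rewrite !mxE big_ord1 !mxE mulrCA mulrA.
Qed.

Lemma entry_row_adj m n p (A : 'M[C]_(m,n)) (B : 'M[C]_n) (A' : 'M[C]_(p,n)) i j :
  (row i A *m B *m adj (row j A')) 0 0 = (A *m B *m adj A') i j.
Proof.
rewrite -!row_mul; have -> : adj (row j A') = col j (adj A').
  by apply/matrixP => a b; rewrite !mxE.
by rewrite !mxE; apply: eq_bigr => l _; rewrite !mxE.
Qed.

Lemma density_decomp k (i0 : 'I_k) (rho : 'M[C]_k) : density rho ->
  exists (d : 'I_k -> R) (W : 'I_k -> 'M[C]_k),
  [/\ forall i, 0 <= d i, \sum_(i < k) d i = 1, forall i, W i \is unitarymx
    & rho = \sum_(i < k) (d i)%:C%C *: pu i0 (W i)].
Proof.
move=> [[hr pr] tr].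
have Nr : rho \is normalmx by apply/normalmxP; rewrite -adjE hr.
have E := orthomx_spectralP Nr.
set P := spectralmx rho in E; set sp := spectral_diag rho in E.
have Pu : P \is unitarymx by exact: spectral_unitarymx.
have Pinv : invmx P = adj P by rewrite invmx_unitary.
have Ps : P *m adj P = 1%:M by exact/unitarymxP.
have PsP : adj P *m P = 1%:M by apply: mulmx1C.
have spE : forall i, sp 0 i = (row i P *m rho *m adj (row i P)) 0 0.
  move=> i; rewrite entry_row_adj {1}E Pinv !mulmxA Ps mul1mx -mulmxA Ps mulmx1.
  by rewrite mxE eqxx mulr1n.
have sp0 : forall i, 0 <= sp 0 i by move=> i; rewrite spE; exact: pr.
have spC : forall i, sp 0 i = (complex.Re (sp 0 i))%:C%C.
  move=> i; have := ger0_Im (sp0 i); case: (sp 0 i) => a b /= ->; by [].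
exists (fun i => complex.Re (sp 0 i)), (fun i => xrow i0 i P); split.
- move=> i; have := sp0 i; rewrite {1}spC lecR //.
- have : complex.Re (\tr rho) = 1 by rewrite tr.
  rewrite E mxtrace_mulC mulmxA Pinv Ps mul1mx mxtrace_diag Re_sum //.
- by move=> i; exact: xrow_unitary.
- rewrite {1}E Pinv mul_diag_sum; apply: eq_bigr => i _.
  rewrite /pu row_xrow -spC; congr (_ *: (_ *m _)).
  by apply/matrixP => a b; rewrite !mxE.
Qed.


Lemma Re_norm (z : C) : `|complex.Re z| <= complex.Re `|z|.
Proof.
rewrite normc_def /= -sqrtr_sqr ler_sqrt; last by rewrite addr_ge0 // sqr_ge0.
by rewrite lerDl sqr_ge0.
Qed.

Lemma Re_mono (x y : C) : x <= y -> complex.Re x <= complex.Re y.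
Proof. by rewrite lecE => /andP[]. Qed.

Lemma row_entry_le1 n (r : 'rV[C]_n) i x : r *m adj r = 1%:M -> `|r i x| <= 1.
Proof.
rewrite (ord1 i); move=> /matrixP /(_ 0 0); rewrite !mxE /= mulr1n => h1.
rewrite -(@expr_le1 _ 2) // normCK -h1 (bigD1 x) //= adj_entry lerDl.
by apply: sumr_ge0 => j _; rewrite adj_entry mul_conjC_ge0.
Qed.

Lemma quad_bound n (w : 'rV[C]_n) (H : 'M[C]_n) : (forall a, `|w 0 a| <= 1) ->
  `|(w *m H *m adj w) 0 0| <= \sum_b \sum_a `|H a b|.
Proof.
move=> hw; rewrite mxE (le_trans (ler_norm_sum _ _ _)) //; apply: ler_sum => b _.
rewrite normrM adj_entry norm_conjC mxE.
apply: (le_trans (ler_piMr _ (hw b))) => //.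
rewrite (le_trans (ler_norm_sum _ _ _)) //; apply: ler_sum => a _.
by rewrite normrM mulrC ler_piMr.
Qed.


Lemma pure_bound m n (i0 : 'I_m) (j0 : 'I_n) (H : 'M[C]_(m*n)) W1 W2 :
  W1 \is unitarymx -> W2 \is unitarymx ->
  `|fE H (pu i0 W1 *t pu j0 W2)| <= complex.Re (\sum_b \sum_a `|H a b|).
Proof.
move=> W1u W2u.
have E : pu i0 W1 *t pu j0 W2 = adj (row i0 W1 *t row j0 W2) *m (row i0 W1 *t row j0 W2).
  by rewrite adjT tensmx_mul.
rewrite E /fE -mulmxA mxtrace_mulC trace_mx11.
apply: (le_trans (Re_norm _)); apply: Re_mono; apply: quad_bound => a.
rewrite !mxE normrM; apply: mulr_ile1 => //.
- by have := row_entry_le1 0 (mxtens_unindex a).1 (row_unit i0 W1u); rewrite mxE.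
- by have := row_entry_le1 0 (mxtens_unindex a).2 (row_unit j0 W2u); rewrite mxE.
Qed.


Lemma unitary1 k : (1%:M : 'M[C]_k) \is unitarymx.
Proof. by apply/unitarymxP; rewrite trmx1 map_mx1 mulmx1. Qed.

Lemma sep_bound m n (i0 : 'I_m) (j0 : 'I_n) (H : 'M[C]_(m*n)) lo hi rho :
  (forall W1 W2, W1 \is unitarymx -> W2 \is unitarymx ->
     lo <= fE H (pu i0 W1 *t pu j0 W2) <= hi) ->
  @separable R m n rho -> lo <= fE H rho <= hi.
Proof.
move=> hW [k [p [ra [rb [p0 p1 hd ->]]]]].
apply: conv_bound => // i; have [da [Wa [da0 da1 Wau ->]]] := density_decomp i0 (hd i).1.
rewrite tens_suml; apply: conv_bound => // j.
have [db [Wb [db0 db1 Wbu ->]]] := density_decomp j0 (hd i).2.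
rewrite tens_sumr; apply: conv_bound => // l; exact: hW.
Qed.

Lemma orbit_sep m n (rho : 'M[C]_(m*n)) Ua Ub :
  Ua \is unitarymx -> Ub \is unitarymx -> @separable R m n rho ->
  @separable R m n ((Ua *t Ub) *m rho *m adj (Ua *t Ub)).
Proof.
move=> Uau Ubu [k [p [ra [rb [p0 p1 hd ->]]]]].
exists k, p, (fun i => Ua *m ra i *m adj Ua), (fun i => Ub *m rb i *m adj Ub); split => //.
- by move=> i; split; apply: unitary_conj_density => //; case: (hd i).
- rewrite mulmx_sumr mulmx_suml; apply: eq_bigr => i _.
  by rewrite -scalemxAr -scalemxAl adjT !tensmx_mul.
Qed.


Lemma pu_conj k (i0 : 'I_k) (W : 'M[C]_k) : adj W *m pu i0 1%:M *m W = pu i0 W.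
Proof.
rewrite /pu; have -> : row i0 W = row i0 1%:M *m W by rewrite -row_mul mul1mx.
by rewrite adjM !mulmxA.
Qed.

Lemma eigN k (A : 'M[C]_k) a : eigenvalue (-A) a -> eigenvalue A (-a).
Proof.
move/eigenvalueP => [v hv nz]; apply/eigenvalueP; exists v => //.
by rewrite scaleNr -hv mulmxN opprK.
Qed.

Lemma sup_eq_mem (E : set R) x : E x -> ubound E x -> sup E = x.
Proof.
move=> Ex ub; apply/le_anti/andP; split; first by apply: ge_sup => //; exists x.
by apply: ub_le_sup => //; exists x.
Qed.

End Helpers.

Local Open Scope classical_set_scope.
Unset Implicit Arguments.
Set Strict Implicit.

Theorem theorem1 (R : realType) (m n : nat) (Hm : (0 < m)%N) (Hn : (0 < n)%N)
  (H : 'M[R[i]]_(m * n)) :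
  hermitian_op H ->
  CP1 H = (Emax H - Emin H) - (DeltaESep H + DeltaESep (- H)).
Proof.
move=> _.
pose i0 : 'I_m := Ordinal Hm; pose j0 : 'I_n := Ordinal Hn.
pose S := [set x | exists rho, @separable R m n rho /\ x = complex.Re (\tr (rho *m H))].
pose G := [set x | exists W1 W2, [/\ W1 \is unitarymx, W2 \is unitarymx &
                   x = fE H (pu i0 W1 *t pu j0 W2)]].
pose B := complex.Re (\sum_b \sum_a `|H a b|).
have G_ne : G !=set0 by exists (fE H (pu i0 1%:M *t pu j0 1%:M)), 1%:M, 1%:M; split => //; exact: unitary1.
have G_b : forall x, G x -> `|x| <= B by move=> x [W1 [W2 [? ? ->]]]; exact: pure_bound.
have G_ub : has_ubound G by exists B => x /G_b; apply: le_trans; exact: ler_norm.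
have G_lb : has_lbound G.
  by exists (- B) => x /G_b; rewrite ler_norml => /andP[].
have G_S : forall x, G x -> S x.
  move=> x [W1 [W2 [W1u W2u ->]]]; exists (pu i0 W1 *t pu j0 W2); split => //.
  exists 1%N, (fun _ => 1), (fun _ => pu i0 W1), (fun _ => pu j0 W2); split => //.
  - by rewrite big_ord1.
  - by move=> _; split; apply: pu_density.
  - by rewrite big_ord1 scale1r.
have S_b : forall x, S x -> inf G <= x <= sup G.
  move=> x [rho [sr ->]]; apply: (sep_bound (i0 := i0) (j0 := j0)) => // W1 W2 W1u W2u.
  apply/andP; split; [apply: ge_inf => //| apply: ub_le_sup => //];
    by exists W1, W2.
have S_ub : has_ubound S by exists (sup G) => x /S_b /andP[].
have S_lb : has_lbound S by exists (inf G) => x /S_b /andP[].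
have supSG : sup S = sup G.
  apply/le_anti/andP; split.
    apply: ge_sup; first by case: G_ne => x /G_S ?; exists x.
    by move=> x /S_b /andP[].
  apply: ge_sup => // x /G_S; exact: ub_le_sup.
have infSG : inf S = inf G.
  apply/le_anti/andP; split.
    apply: lb_le_inf => // x /G_S; exact: ge_inf.
  apply: lb_le_inf; first by case: G_ne => x /G_S ?; exists x.
  by move=> x /S_b /andP[].
have L_S : forall rho, @separable R m n rho -> local_energies H rho `<=` S.
  move=> rho sr x [Ua [Ub [Uau Ubu ->]]].
  by exists ((Ua *t Ub) *m rho *m adj (Ua *t Ub)); split => //; exact: orbit_sep.
have L_ne : forall rho, local_energies H rho !=set0.
  by move=> rho; exists (energy H rho 1%:M 1%:M), 1%:M, 1%:M; split => //; exact: unitary1.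
have CP_le : forall rho, @separable R m n rho -> CP rho H <= sup G - inf G.
  move=> rho sr; rewrite /CP; apply: lerB.
    by apply: ge_sup => // x /(L_S _ sr) /S_b /andP[].
  by apply: lb_le_inf => // x /(L_S _ sr) /S_b /andP[].
pose rho0 := pu i0 (1%:M : 'M[R[i]]_m) *t pu j0 (1%:M : 'M[R[i]]_n).
have sr0 : @separable R m n rho0.
  exists 1%N, (fun _ => 1), (fun _ => pu i0 1%:M), (fun _ => pu j0 1%:M); split => //.
  - by rewrite big_ord1.
  - by move=> _; split; apply: pu_density; exact: unitary1.
  - by rewrite big_ord1 scale1r.
have G_L0 : G `<=` local_energies H rho0.
  move=> x [W1 [W2 [W1u W2u ->]]]; exists (adj W1), (adj W2); split.
  - by rewrite adjE trmxC_unitary.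
  - by rewrite adjE trmxC_unitary.
  rewrite /energy /fE /rho0 adjT !adjK !tensmx_mul !pu_conj //.
have L0_ub : has_ubound (local_energies H rho0).
  by exists (sup G) => x /(L_S _ sr0) /S_b /andP[].
have L0_lb : has_lbound (local_energies H rho0).
  by exists (inf G) => x /(L_S _ sr0) /S_b /andP[].
have CP0 : CP rho0 H = sup G - inf G.
  apply/le_anti/andP; split; first exact: CP_le.
  rewrite /CP; apply: lerB.
    by apply: ge_sup => // x /G_L0; apply: ub_le_sup.
  by apply: lb_le_inf => // x /G_L0; apply: ge_inf.
have LHS : CP1 H = sup G - inf G.
  rewrite /CP1; apply: sup_eq_mem; first by exists rho0.
  by move=> y [rho [sr ->]]; apply: CP_le.
have e1 : inf [set x | exists rho, @separable R m n rho /\ x = complex.Re (\tr (rho *m - H))]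
          = - sup S.
  rewrite /inf; congr (- sup _); apply/seteqP; split => x.
    case => y [rho [sr ->]] <-; exists rho; split => //.
    by rewrite mulmxN linearN ReN opprK.
  case => rho [sr ->]; exists (complex.Re (\tr (rho *m - H))); first by exists rho.
  by rewrite mulmxN linearN ReN opprK.
have e2 : Emin (- H) = - Emax H.
  rewrite /Emin /Emax /inf; congr (- sup _); apply/seteqP; split => x.
    case => y ey <-; rewrite /= raddfN; exact: eigN.
  move=> ex; exists (- x); last exact: opprK.
  rewrite /= raddfN; apply: eigN; by rewrite opprK.
rewrite LHS /DeltaESep e1 e2 -/S supSG infSG.
move: (sup G) (inf G) (Emax H) (Emin H) => a b c d.
lra.
Qed.
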